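(* Every solid branchwise implicative weak BCC-algebra is branchwise commutative.
   Context: A weak BCC-algebra is a set $X$ with a binary operation $*$ and a constant $0$ satisfying, for all $x,y,z\in X$: (i) $((x*y)*(z*y))*(x*z)=0$; (ii) $x*x=0$; (iii) $x*0=x$; (iv) $x*y=y*x=0$ implies $x=y$. The relation $x\leqslant y$ iff $x*y=0$ is a partial order on $X$. Let $I(X)$ be the set of minimal elements of $X$ with respect to $\leqslant$. For $a\in I(X)$ the branch initiated by $a$ is $B(a)=\{x\in X: a\leqslant x\}$; ''belonging to the same branch'' means lying in a common $B(a)$. A weak BCC-algebra is called (left) solid if $(x*y)*z=(x*z)*y$ holds for all $x,y$ belonging to the same branch and all $z\in X$. It is branchwise implicative if $x*(y*x)=x$ for all $x,y$ belonging to the same branch, and branchwise commutative if $x*(x*y)=y*(y*x)$ for all $x,y$ belonging to the same branch. *)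

(* Defs.v *)
Record weak_BCC (X : Type) (op : X -> X -> X) (z : X) : Prop := {
  wbcc_i   : forall x y w, op (op (op x y) (op w y)) (op x w) = z;
  wbcc_ii  : forall x, op x x = z;
  wbcc_iii : forall x, op x z = x;
  wbcc_iv  : forall x y, op x y = z -> op y x = z -> x = y
}.

Definition bcc_le {X : Type} (op : X -> X -> X) (z : X) (x y : X) : Prop :=
  op x y = z.

Definition minimal_elt {X : Type} (op : X -> X -> X) (z : X) (a : X) : Prop :=
  forall y, bcc_le op z y a -> y = a.

Definition in_branch {X : Type} (op : X -> X -> X) (z : X) (a x : X) : Prop :=
  bcc_le op z a x.

Definition same_branch {X : Type} (op : X -> X -> X) (z : X) (x y : X) : Prop :=
  exists a, minimal_elt op z a /\ in_branch op z a x /\ in_branch op z a y.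

Definition solid {X : Type} (op : X -> X -> X) (z : X) : Prop :=
  forall x y w, same_branch op z x y -> op (op x y) w = op (op x w) y.

Definition branchwise_implicative {X : Type} (op : X -> X -> X) (z : X) : Prop :=
  forall x y, same_branch op z x y -> op x (op y x) = x.

Definition branchwise_commutative {X : Type} (op : X -> X -> X) (z : X) : Prop :=
  forall x y, same_branch op z x y -> op x (op x y) = op y (op y x).

(* Main.v *)
Require Import Defs.

Theorem theorem3p8 (X : Type) (op : X -> X -> X) (z : X) :
  weak_BCC X op z ->
  solid op z ->
  branchwise_implicative op z ->
  branchwise_commutative op z.
Proof.
  intros [A1 A2 A3 A4] Sol Imp.
  assert (M1 : forall p q r, op p q = z -> op (op r q) (op r p) = z).
  { intros p q r H. pose proof (A1 r q p) as E. rewrite H, A3 in E. exact E. }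
  assert (M2 : forall p q r, op p q = z -> op q r = z -> op p r = z).
  { intros p q r H1 H2. pose proof (A1 p r q) as E. rewrite H1, A3, H2 in E.
    rewrite <- (A3 (op p r)). exact E. }
  assert (Sym : forall p q, same_branch op z p q -> same_branch op z q p).
  { intros p q [a [Ha [H1 H2]]]. exists a; tauto. }
  assert (Half : forall x y, same_branch op z x y ->
            op (op y (op y x)) (op x (op x y)) = z).
  { intros x y Hs. destruct Hs as [a [Ha [Hx Hy]]].
    unfold in_branch, bcc_le in Hx, Hy.
    set (v := op y (op y x)).
    assert (Hsxy : same_branch op z x y) by (exists a; auto).
    assert (Hvx : op v x = z).
    { unfold v. rewrite <- (Sol y x (op y x) (Sym _ _ Hsxy)). apply A2. }
    assert (H0 : op z (op y x) = z).
    { pose proof (A1 a x y) as E. rewrite Hx, Hy, A3 in E. exact E. }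
    assert (Hvy : op v y = z).
    { unfold v. assert (Hyy : same_branch op z y y) by (exists a; auto).
      rewrite <- (Sol y y (op y x) Hyy). rewrite A2. exact H0. }
    assert (Hyya : op y (op y a) = a).
    { apply Ha. unfold bcc_le.
      assert (Hya : same_branch op z y a) by (exists a; split; [exact Ha | split; [exact Hy | apply A2]]).
      rewrite <- (Sol y a (op y a) Hya). apply A2. }
    assert (Hav : op a v = z).
    { rewrite <- Hyya. unfold v. apply M1. apply M1. exact Hx. }
    assert (Hsvx : same_branch op z v x) by (exists a; auto).
    assert (P : op x (op x v) = v).
    { apply A4.
      - rewrite <- (Sol x v (op x v) (Sym _ _ Hsvx)). apply A2.
      - pose proof (A1 v (op x v) x) as E. rewrite (Imp v x Hsvx), Hvx, A3 in E.
        exact E. }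
    rewrite <- P. apply M1. apply M1. exact Hvy. }
  intros x y Hs. apply A4.
  - apply Half. apply Sym. exact Hs.
  - apply Half. exact Hs.
Qed.
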